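(* Sufficiency and separation are not incrementally conservative fairness measures. Precisely: there exist binary random variables $Y, A$ and two binary predictors $R, R'$ of $Y$, defined on the same population (so that the joint distribution of $(Y,A)$ is the same in both cases), such that $R$ satisfies both sufficiency ($Y \perp A \mid R$) and separation ($R \perp A \mid Y$), $R'$ has strictly higher accuracy than $R$, i.e. $P(R'=Y) > P(R=Y)$, and yet $R'$ satisfies neither sufficiency ($Y \perp A \mid R'$ fails) nor separation ($R' \perp A \mid Y$ fails).
   Context: Setting: $Y$ is the true label, $R$ is a prediction of $Y$, and $A$ is a group-membership variable, all random variables on a common probability space. $X \perp Z$ denotes independence, $P(X,Z)=P(X)P(Z)$; $X \perp Z \mid W$ denotes conditional independence, $P(X \mid Z, W) = P(X \mid W)$. A predictor $R$ satisfies sufficiency if $Y \perp A \mid R$, and separation if $R \perp A \mid Y$. The accuracy of a predictor $R$ is the degree to which it agrees with $Y$, i.e. $P(R=Y)$. A fairness measure is called incrementally conservative if the degree to which the measure is satisfied does not decrease when the accuracy of the predictor is increased; in particular, failure of incremental conservativeness is witnessed by a predictor satisfying the measure exactly together with a more accurate predictor that no longer satisfies it. *)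

(* Defs.v *)
From HB Require Import structures.
From mathcomp Require Import all_boot all_order all_algebra.
Set Implicit Arguments. Unset Strict Implicit. Unset Printing Implicit Defensive.
Import Order.TTheory GRing.Theory Num.Theory.
Local Open Scope ring_scope.

Section Prob.
Variables (F : realFieldType) (Omega : finType).

Definition is_prob (P : {ffun Omega -> F}) : Prop :=
  (forall w, 0 <= P w) /\ \sum_(w : Omega) P w = 1.

Definition Pr (P : {ffun Omega -> F}) (E : pred Omega) : F :=
  \sum_(w : Omega | E w) P w.

Definition cond_indep (TX TZ TW : eqType) (P : {ffun Omega -> F})
    (X : Omega -> TX) (Z : Omega -> TZ) (W : Omega -> TW) : Prop :=
  forall (x : TX) (z : TZ) (w : TW),
    0 < Pr P [pred o | (Z o == z) && (W o == w)] ->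
    Pr P [pred o | [&& X o == x, Z o == z & W o == w]]
      / Pr P [pred o | (Z o == z) && (W o == w)]
    = Pr P [pred o | (X o == x) && (W o == w)] / Pr P [pred o | W o == w].

Definition sufficiency (TY TA TR : eqType) (P : {ffun Omega -> F})
    (Y : Omega -> TY) (A : Omega -> TA) (R : Omega -> TR) : Prop :=
  cond_indep P Y A R.
Definition separation (TY TA TR : eqType) (P : {ffun Omega -> F})
    (Y : Omega -> TY) (A : Omega -> TA) (R : Omega -> TR) : Prop :=
  cond_indep P R A Y.

Definition accuracy (T : eqType) (P : {ffun Omega -> F})
    (R Y : Omega -> T) : F :=
  Pr P [pred o | R o == Y o].

End Prob.

(* Main.v *)
Require Import Defs.
From HB Require Import structures.
From mathcomp Require Import all_boot all_order all_algebra.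
From mathcomp Require Import ring lra.
Import Order.TTheory GRing.Theory Num.Theory.
Local Open Scope ring_scope.

Lemma PrE (F : realFieldType) (E : pred (bool * bool)) :
  Pr [ffun _ => (4%:R : F)^-1] E =
  ((E (false,false))%:R + (E (false,true))%:R + (E (true,false))%:R
   + (E (true,true))%:R) / 4%:R.
Proof.
rewrite /Pr big_mkcond /=.
rewrite (eq_bigr (fun p => (fun i j => if E (i,j) then [ffun _ => (4%:R : F)^-1] (i,j) else 0) p.1 p.2)); last by case.
rewrite -(pair_bigA _ (fun i j => if E (i,j) then [ffun _ => (4%:R : F)^-1] (i,j) else 0)) /=.
rewrite !big_bool /= !ffunE.
by case: (E (false,false)); case: (E (false,true)); case: (E (true,false));
   case: (E (true,true)) => /=; rewrite ?(add0r, addr0, mul1r, mul0r); field.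
Qed.

Theorem proposition2p8 (F : realFieldType) :
  exists (Omega : finType) (P : {ffun Omega -> F})
         (Y A R R' : Omega -> bool),
    is_prob P /\
    sufficiency P Y A R /\ separation P Y A R /\
    accuracy P R Y < accuracy P R' Y /\
    ~ sufficiency P Y A R' /\ ~ separation P Y A R'.
Proof.
exists (bool * bool)%type, [ffun _ => (4%:R : F)^-1],
  fst, snd, (fun _ => false), (fun o => o.1 && ~~ o.2).
split.
  split; first by move=> w; rewrite ffunE invr_ge0 ler0n.
  have := @PrE F xpredT; rewrite /Pr /= => ->; field; done.
split.
  rewrite /sufficiency /separation /cond_indep => x z w _; rewrite !PrE /=.
  by case: x; case: z; case: w => /=; rewrite ?(add0r, addr0, mul0r, mulr0, invr0) //; field; done.
split.
  rewrite /sufficiency /separation /cond_indep => x z w _; rewrite !PrE /=.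
  by case: x; case: z; case: w => /=; rewrite ?(add0r, addr0, mul0r, mulr0, invr0) //; field; done.
split.
  rewrite /accuracy !PrE /=; lra.
split.
  rewrite /sufficiency /separation /cond_indep => /(_ true true false); rewrite !PrE /= => H.
  have : (0 : F) < (0 + 1 + 0 + 1) / 4%:R by lra.
  move/H.
  have -> : (0 + 0 + 0 + 1) / 4%:R / ((0 + 1 + 0 + 1) / 4%:R) = (1 : F) / 2%:R by field; done.
  have -> : (0 + 0 + 0 + 1) / 4%:R / ((1 + 1 + 0 + 1) / 4%:R) = (1 : F) / 3%:R by field; done.
  lra.
rewrite /sufficiency /separation /cond_indep => /(_ true true true); rewrite !PrE /= => H.
have : (0 : F) < (0 + 0 + 0 + 1) / 4%:R by lra.
move/H.
have -> : (0 + 0 + 0 + 0) / 4%:R / ((0 + 0 + 0 + 1) / 4%:R) = (0 : F) by field; done.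
have -> : (0 + 0 + 1 + 0) / 4%:R / ((0 + 0 + 1 + 1) / 4%:R) = (1 : F) / 2%:R by field; done.
lra.
Qed.
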